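(* Let $m,n,k\in\mathbb{N}$ and let $\mathrm{vec}:\mathbb{R}^{m\times n}\to\mathbb{R}^{mn}$ be column-major vectorization. Then for every $f\in ISD(\mathbb{R}^{mn},\mathbb{R}^k)$ there exists $\mathcal N\in MRNN(\mathbb{R}^{m\times n},\mathbb{R}^k)$ with $f=\mathcal N\circ\mathrm{vec}^{-1}$, and for every $\mathcal N\in MRNN(\mathbb{R}^{m\times n},\mathbb{R}^k)$ there exists $f\in ISD(\mathbb{R}^{mn},\mathbb{R}^k)$ with $\mathcal N=f\circ\mathrm{vec}$. Consequently $\mathcal N\mapsto \mathcal N\circ\mathrm{vec}^{-1}$ is a bijective ring homomorphism $MRNN(\mathbb{R}^{m\times n},\mathbb{R}^k)\to ISD(\mathbb{R}^{mn},\mathbb{R}^k)$ (pointwise operations).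
   Context: $ISD(\mathbb{R}^N,\mathbb{R}^k)$: maps whose components lie in the smallest set of functions $\mathbb{R}^N\to\mathbb{R}$ containing all real polynomials and closed under pointwise $\min$, $\max$. An $L$-layer matrix-recurrent neural network (MRNN) with input $X\in\mathbb{R}^{m\times n}$ computes $h_0=0\in\mathbb{R}^{d_0}$ and, for $\ell=1,\dots,L$, $h_\ell = b_{\ell,0} + A_{\ell,0}h_{\ell-1} + B_{\ell,0}(I\otimes X)h_{\ell-1} + \sigma\big(b_{\ell,1} + A_{\ell,1}h_{\ell-1} + B_{\ell,1}(I\otimes X)h_{\ell-1}\big)$, and outputs $h_L\in\mathbb{R}^k$; here $\sigma=\mathrm{ReLU}=\max(0,\cdot)$ componentwise, $I\otimes X$ is a Kronecker product with an identity matrix whose size may vary per layer (and per term) so that the products are defined, and $b_{\ell,i},A_{\ell,i},B_{\ell,i}$ are real vectors/matrices of compatible sizes (widths arbitrary). $MRNN(\mathbb{R}^{m\times n},\mathbb{R}^k)$ is the set of all functions computed by such networks for some $L\ge0$. *)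

(* Defs.v *)
From HB Require Import structures.
From mathcomp Require Import all_boot all_order all_algebra.
From mathcomp Require Import mpoly.
From mathcomp Require Import mxtens.
From mathcomp Require Import reals.

Set Implicit Arguments.
Unset Strict Implicit.
Unset Printing Implicit Defensive.

Import Order.TTheory GRing.Theory Num.Theory.
Local Open Scope ring_scope.

Section Defs.
Variable R : realType.

Inductive isd_scalar (N : nat) : ('cV[R]_N -> R) -> Prop :=
| isd_poly (p : {mpoly R[N]}) :
    isd_scalar (fun v => p.@[fun i => v i ord0])
| isd_min f g : isd_scalar f -> isd_scalar g ->
    isd_scalar (fun v => Num.min (f v) (g v))
| isd_max f g : isd_scalar f -> isd_scalar g ->
    isd_scalar (fun v => Num.max (f v) (g v)).

Definition ISD (N k : nat) (f : 'cV[R]_N -> 'cV[R]_k) : Prop :=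
  forall i : 'I_k, isd_scalar (fun v => f v i ord0).

(* mxvec is row-major (entry (i,j) of an m x n matrix at index i*n+j), so   *)
(* mxvec X^T puts X i j at index j*m+i, i.e. column-major order.            *)
Definition vec (m n : nat) (X : 'M[R]_(m, n)) : 'cV[R]_(m * n) :=
  (castmx (erefl 1%N, mulnC n m) (mxvec X^T))^T.

Definition unvec (m n : nat) (v : 'cV[R]_(m * n)) : 'M[R]_(m, n) :=
  (vec_mx (castmx (erefl 1%N, mulnC m n) v^T))^T.

Definition relu (d : nat) (x : 'cV[R]_d) : 'cV[R]_d := map_mx (fun a => Num.max 0 a) x.

(* mrnn_reach m n d h : the map X |-> h X (with values in R^d) is the       *)
(* hidden state h_L of some MRNN with L >= 0 layers and output width d.     *)
(* In a layer with input h : R^{d} and output in R^{d'}, the term           *)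
(* B_i (I_{p_i} (x) X) h is defined exactly when p_i * n = d (the size p_i  *)
(* of the identity may differ between the two terms), B_i : d' x (p_i m).   *)
Inductive mrnn_reach (m n : nat) : forall d : nat, ('M[R]_(m, n) -> 'cV[R]_d) -> Prop :=
| mrnn_zero (d0 : nat) : @mrnn_reach m n d0 (fun _ => 0)
| mrnn_layer (d d' : nat) (h : 'M[R]_(m, n) -> 'cV[R]_d)
    (p0 p1 : nat) (e0 : (p0 * n)%N = d) (e1 : (p1 * n)%N = d)
    (b0 b1 : 'cV[R]_d') (A0 A1 : 'M[R]_(d', d))
    (B0 : 'M[R]_(d', p0 * m)) (B1 : 'M[R]_(d', p1 * m)) :
    @mrnn_reach m n d h ->
    @mrnn_reach m n d' (fun X =>
      b0 + A0 *m h X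
         + B0 *m (((1%:M : 'M[R]_p0) *t X) *m castmx (esym e0, erefl 1%N) (h X))
      + relu (b1 + A1 *m h X
         + B1 *m (((1%:M : 'M[R]_p1) *t X) *m castmx (esym e1, erefl 1%N) (h X)))).

Definition MRNN (m n k : nat) (N : 'M[R]_(m, n) -> 'cV[R]_k) : Prop :=
  @mrnn_reach m n k N.

Definition hadamard (k : nat) (a b : 'cV[R]_k) : 'cV[R]_k := map2_mx *%R a b.

End Defs.

(* Main.v *)
Require Import Defs.
From HB Require Import structures.
From mathcomp Require Import all_boot all_order all_algebra.
From mathcomp Require Import mpoly mxtens reals.
From mathcomp Require Import ring lra.
From Stdlib Require Import FunctionalExtensionality.
Import Order.TTheory GRing.Theory Num.Theory.
Local Open Scope ring_scope.
Set Implicit Arguments.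
Unset Strict Implicit.
Ltac noif t := lazymatch t with context[if _ then _ else _] => fail | _ => idtac end.
Ltac splitif := repeat match goal with
  | |- context [if ?a <= ?b then _ else _] => noif a; noif b; case: (lerP a b) => ?
  end.

Lemma keymin (R : realDomainType) (x a b k : R) : `|a| <= k -> `|b| <= k ->
  x * Num.min a b = Num.max (Num.min (Num.min (x*a) (x*b)) (x*k)) (Num.min (Num.max (x*a) (x*b)) (-(x*k))).
Proof.
rewrite !ler_norml => /andP[h1 h2] /andP[h3 h4].
have [hx|hx] := lerP 0 x;
rewrite !minEle !maxEle; splitif; nra.
Qed.
Lemma keymax (R : realDomainType) (x a b k : R) : `|a| <= k -> `|b| <= k ->
  x * Num.max a b = Num.max (Num.min (Num.max (x*a) (x*b)) (x*k)) (Num.min (Num.min (x*a) (x*b)) (-(x*k))).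
Proof.
rewrite !ler_norml => /andP[h1 h2] /andP[h3 h4].
have [hx|hx] := lerP 0 x;
rewrite !minEle !maxEle; splitif; nra.
Qed.

Section S.
Variable R : realType.
Variable N : nat.
Definition pf (p : {mpoly R[N]}) := fun v : 'cV[R]_N => p.@[fun i => v i ord0].

Lemma isd_ext (f g : 'cV[R]_N -> R) : f =1 g -> isd_scalar f -> isd_scalar g.
Proof. by move=> /functional_extensionality ->. Qed.

Lemma isd_const (c : R) : isd_scalar (fun _ : 'cV[R]_N => c).
Proof. apply: isd_ext (isd_poly c%:MP) => v; by rewrite mevalC. Qed.

Lemma isd_add f g : isd_scalar f -> isd_scalar g -> isd_scalar (fun v : 'cV[R]_N => f v + g v).
Proof.
move=> hf; elim: hf g => [p|f1 f2 _ IH1 _ IH2|f1 f2 _ IH1 _ IH2] g hg.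
- elim: hg => [q|g1 g2 _ I1 _ I2|g1 g2 _ I1 _ I2].
  + apply: isd_ext (isd_poly (p + q)) => v; by rewrite mevalD.
  + apply: isd_ext (isd_min I1 I2) => v /=. by rewrite addr_minr.
  + apply: isd_ext (isd_max I1 I2) => v /=. by rewrite addr_maxr.
- apply: isd_ext (isd_min (IH1 g hg) (IH2 g hg)) => v /=. by rewrite addr_minl.
- apply: isd_ext (isd_max (IH1 g hg) (IH2 g hg)) => v /=. by rewrite addr_maxl.
Qed.
Lemma absle (x : R) : `|x| <= x * x + 1.
Proof. case: (lerP 0 x) => hx; [rewrite ger0_norm // | rewrite ltr0_norm //]; nra. Qed.

Lemma isd_bound f : isd_scalar f -> exists K : {mpoly R[N]}, forall v : 'cV[R]_N, `|f v| <= K.@[fun i => v i ord0].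
Proof.
elim=> [p|f1 f2 _ [K1 H1] _ [K2 H2]|f1 f2 _ [K1 H1] _ [K2 H2]].
- exists (p * p + 1) => v; rewrite mevalD mevalM meval1; exact: absle.
- exists (K1 + K2) => v; rewrite mevalD.
  have := H1 v; have := H2 v; have := normr_ge0 (f1 v); have := normr_ge0 (f2 v).
  rewrite minEle; case: ifP => _; lra.
- exists (K1 + K2) => v; rewrite mevalD.
  have := H1 v; have := H2 v; have := normr_ge0 (f1 v); have := normr_ge0 (f2 v).
  rewrite maxEle; case: ifP => _; lra.
Qed.

Lemma isd_pmul f : isd_scalar f -> forall p : {mpoly R[N]}, isd_scalar (fun v : 'cV[R]_N => p.@[fun i => v i ord0] * f v).
Proof.
move=> hf; elim: hf => [q|f1 f2 h1 IH1 h2 IH2|f1 f2 h1 IH1 h2 IH2] p.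
- apply: isd_ext (isd_poly (p * q)) => v; by rewrite mevalM.
- have [K1 HK1] := isd_bound h1; have [K2 HK2] := isd_bound h2.
  apply: isd_ext (isd_max (isd_min (isd_min (IH1 p) (IH2 p)) (isd_poly (p * (K1 + K2))))
                          (isd_min (isd_max (IH1 p) (IH2 p)) (isd_poly (- (p * (K1 + K2)))))) => v /=.
  rewrite mevalN mevalM; symmetry; apply: keymin.
  + have := HK1 v; have := HK2 v; have := normr_ge0 (f2 v); rewrite mevalD; lra.
  + have := HK1 v; have := HK2 v; have := normr_ge0 (f1 v); rewrite mevalD; lra.
- have [K1 HK1] := isd_bound h1; have [K2 HK2] := isd_bound h2.
  apply: isd_ext (isd_max (isd_min (isd_max (IH1 p) (IH2 p)) (isd_poly (p * (K1 + K2))))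
                          (isd_min (isd_min (IH1 p) (IH2 p)) (isd_poly (- (p * (K1 + K2)))))) => v /=.
  rewrite mevalN mevalM; symmetry; apply: keymax.
  + have := HK1 v; have := HK2 v; have := normr_ge0 (f2 v); rewrite mevalD; lra.
  + have := HK1 v; have := HK2 v; have := normr_ge0 (f1 v); rewrite mevalD; lra.
Qed.

Lemma isd_sum k (F : 'I_k -> 'cV[R]_N -> R) : (forall j, isd_scalar (F j)) ->
  isd_scalar (fun v => \sum_j F j v).
Proof.
elim: k F => [|k IH] F hF.
- apply: isd_ext (isd_const 0) => v; by rewrite big_ord0.
- apply: isd_ext (isd_add (IH (fun j => F (widen_ord (leqnSn k) j)) (fun j => hF _)) (hF ord_max)) => v.
  by rewrite big_ord_recr.
Qed.

Lemma isd_relu f : isd_scalar f -> isd_scalar (fun v : 'cV[R]_N => Num.max 0 (f v)).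
Proof. move=> h; exact: isd_max (isd_const 0) h. Qed.
Lemma isd_mul f : isd_scalar f -> forall g, isd_scalar g -> isd_scalar (fun v : 'cV[R]_N => g v * f v).
Proof.
elim=> [q|f1 f2 h1 IH1 h2 IH2|f1 f2 h1 IH1 h2 IH2] g hg.
- apply: isd_ext (isd_pmul hg q) => v; by rewrite mulrC.
- have [K1 HK1] := isd_bound h1; have [K2 HK2] := isd_bound h2.
  have hS := isd_pmul hg (K1 + K2); have hS' := isd_pmul hg (- (K1 + K2)).
  apply: isd_ext (isd_max (isd_min (isd_min (IH1 g hg) (IH2 g hg)) hS)
                          (isd_min (isd_max (IH1 g hg) (IH2 g hg)) hS')) => v /=.
  rewrite mevalN mulNr (mulrC _ (g v)); symmetry; apply: keymin.
  + have := HK1 v; have := HK2 v; have := normr_ge0 (f2 v); rewrite mevalD; lra.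
  + have := HK1 v; have := HK2 v; have := normr_ge0 (f1 v); rewrite mevalD; lra.
- have [K1 HK1] := isd_bound h1; have [K2 HK2] := isd_bound h2.
  have hS := isd_pmul hg (K1 + K2); have hS' := isd_pmul hg (- (K1 + K2)).
  apply: isd_ext (isd_max (isd_min (isd_max (IH1 g hg) (IH2 g hg)) hS)
                          (isd_min (isd_min (IH1 g hg) (IH2 g hg)) hS')) => v /=.
  rewrite mevalN mulNr (mulrC _ (g v)); symmetry; apply: keymax.
  + have := HK1 v; have := HK2 v; have := normr_ge0 (f2 v); rewrite mevalD; lra.
  + have := HK1 v; have := HK2 v; have := normr_ge0 (f1 v); rewrite mevalD; lra.
Qed.
End S.
Section D2.
Variable R : realType.
Variables m n : nat.

Definition uidx (a : 'I_m) (b : 'I_n) : 'I_(m * n) := cast_ord (esym (mulnC m n)) (mxvec_index b a).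

Lemma unvecE (v : 'cV[R]_(m * n)) a b : unvec v a b = v (uidx a b) ord0.
Proof.
rewrite /unvec !mxE castmxE mxE /uidx; congr (v _ _); exact: val_inj.
Qed.

Lemma lin_isd d d' (H : 'cV[R]_(m * n) -> 'cV[R]_d) (A : 'M[R]_(d', d)) r :
  (forall j, isd_scalar (fun v => H v j ord0)) -> isd_scalar (fun v => (A *m H v) r ord0).
Proof.
move=> hH.
apply: isd_ext (isd_sum (fun j => isd_pmul (hH j) (A r j)%:MP)) => v.
by rewrite mxE; apply: eq_bigr => j _; rewrite mevalC.
Qed.

Lemma bil_isd d d' p (e : (p * n)%N = d) (H : 'cV[R]_(m * n) -> 'cV[R]_d) (B : 'M[R]_(d', p * m)) r :
  (forall j, isd_scalar (fun v => H v j ord0)) ->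
  isd_scalar (fun v => (B *m (((1%:M : 'M[R]_p) *t unvec v) *m castmx (esym e, erefl 1%N) (H v))) r ord0).
Proof.
move=> hH.
pose P (a : 'I_(p * m)) (c : 'I_(p * n)) : {mpoly R[m * n]} :=
  (B r a * (1%:M : 'M[R]_p) (mxtens_unindex a).1 (mxtens_unindex c).1)%:MP
   * 'X_(uidx (mxtens_unindex a).2 (mxtens_unindex c).2).
apply: isd_ext (isd_sum (fun a => isd_sum (fun c => isd_pmul (hH (cast_ord e c)) (P a c)))) => v.
rewrite mxE; apply: eq_bigr => a _; rewrite mxE mulr_sumr; apply: eq_bigr => c _.
rewrite /P mevalM mevalC mevalXU castmxE !mxE castmxE mxE !mulrA.
by congr (_ * _ * v _ _ * H v _ _); apply: val_inj.
Qed.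

Lemma reach_isd d (h : 'M[R]_(m, n) -> 'cV[R]_d) : mrnn_reach h ->
  forall r, isd_scalar (fun v : 'cV[R]_(m * n) => h (unvec v) r ord0).
Proof.
elim=> [d0 | {}d d' {}h p0 p1 e0 e1 b0 b1 A0 A1 B0 B1 _ IH] r.
- apply: isd_ext (isd_const _ _) => v; by rewrite mxE.
- pose H := fun v => h (@unvec R m n v).
  apply: isd_ext (isd_add (isd_add (isd_add (isd_const _ (b0 r ord0)) (lin_isd (H:=H) A0 r IH))
     (bil_isd (H:=H) e0 B0 r IH)) (isd_relu (isd_add (isd_add (isd_const _ (b1 r ord0)) (lin_isd (H:=H) A1 r IH))
     (bil_isd (H:=H) e1 B1 r IH)))) => v.
  by rewrite /relu !mxE.
Qed.
End D2.

Section D1.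
Variable R : realType.
Variables m n : nat.
Local Notation M := 'M[R]_(m, n).

Lemma reach_ext d (h h' : M -> 'cV[R]_d) : (forall X, h X = h' X) -> mrnn_reach h -> mrnn_reach h'.
Proof. by move=> /functional_extensionality ->. Qed.

Record lay d d' := Lay { lp0 : nat; lp1 : nat; le0 : (lp0 * n)%N = d; le1 : (lp1 * n)%N = d;
  lb0 : 'cV[R]_d'; lb1 : 'cV[R]_d'; lA0 : 'M[R]_(d', d); lA1 : 'M[R]_(d', d);
  lB0 : 'M[R]_(d', lp0 * m); lB1 : 'M[R]_(d', lp1 * m) }.

Definition Kx p d (e : (p * n)%N = d) (X : M) (u : 'cV[R]_d) : 'cV[R]_(p * m) :=
  ((1%:M : 'M[R]_p) *t X) *m castmx (esym e, erefl 1%N) u.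

Definition lapp d d' (L : lay d d') (X : M) (u : 'cV[R]_d) : 'cV[R]_d' :=
  lb0 L + lA0 L *m u + lB0 L *m Kx (le0 L) X u
  + relu (lb1 L + lA1 L *m u + lB1 L *m Kx (le1 L) X u).

Lemma reach_lapp d d' (L : lay d d') (h : M -> 'cV[R]_d) :
  mrnn_reach h -> mrnn_reach (fun X => lapp L X (h X)).
Proof. case: L => p0 p1 e0 e1 b0 b1 A0 A1 B0 B1 hh; exact: mrnn_layer. Qed.

Lemma relu0 d : relu (0 : 'cV[R]_d) = 0.
Proof. by apply/matrixP => i j; rewrite !mxE maxxx. Qed.

Definition zlay d d' (L : lay d d') d'' : lay d d'' :=
  Lay (le0 L) (le1 L) 0 0 0 0 0 0.

Lemma lapp_z d d' (L : lay d d') d'' X u : lapp (zlay L d'') X u = 0.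
Proof. by rewrite /lapp /= !mul0mx !addr0 relu0 addr0. Qed.

Lemma KE p (X : M) (w : 'cV[R]_(p * n)) (a : 'I_p) (i : 'I_m) :
  (((1%:M : 'M[R]_p) *t X) *m w) (mxtens_index (a, i)) 0 =
  \sum_(l < n) X i l * w (mxtens_index (a, l)) 0.
Proof.
rewrite mxE.
rewrite (reindex (@mxtens_index p n)) /=; last first.
  by exists (@mxtens_unindex p n) => x _; rewrite (mxtens_indexK, mxtens_unindexK).
transitivity (\sum_(b < p) \sum_(l < n) ((1%:M : 'M[R]_p) *t X) (mxtens_index (a, i)) (mxtens_index (b, l)) * w (mxtens_index (b, l)) 0).
  by rewrite pair_big /=; apply: eq_bigr => -[b l] _.
rewrite (bigD1 a) //= [X in _ + X]big1 ?addr0.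
  by apply: eq_bigr => l _; rewrite tensmxE mxE eqxx mul1r.
by move=> b /negPf hb; apply: big1 => l _; rewrite tensmxE mxE eq_sym hb mul0r mul0r.
Qed.
Lemma Kcol p q (X : M) (w1 : 'cV[R]_(p * n)) (w2 : 'cV[R]_(q * n)) :
  ((1%:M : 'M[R]_(p + q)) *t X) *m castmx (esym (mulnDl p q n), erefl 1%N) (col_mx w1 w2)
  = castmx (esym (mulnDl p q m), erefl 1%N)
      (col_mx (((1%:M : 'M[R]_p) *t X) *m w1) (((1%:M : 'M[R]_q) *t X) *m w2)).
Proof.
apply/colP => r; case: (mxtens_indexP r) => a i.
rewrite KE castmxE /= cast_ord_id.
case: (splitP a) => a' ha'.
- have -> : cast_ord (esym (esym (mulnDl p q m))) (mxtens_index (a, i)) = lshift (q * m) (mxtens_index (a', i)).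
    by apply: val_inj; rewrite /= ha'.
  rewrite col_mxEu KE; apply: eq_bigr => l _; rewrite castmxE /= cast_ord_id.
  have -> : cast_ord (esym (esym (mulnDl p q n))) (mxtens_index (a, l)) = lshift (q * n) (mxtens_index (a', l)).
    by apply: val_inj; rewrite /= ha'.
  by rewrite col_mxEu.
- have -> : cast_ord (esym (esym (mulnDl p q m))) (mxtens_index (a, i)) = rshift (p * m) (mxtens_index (a', i)).
    by apply: val_inj; rewrite /= ha' mulnDl addnA.
  rewrite col_mxEd KE; apply: eq_bigr => l _; rewrite castmxE /= cast_ord_id.
  have -> : cast_ord (esym (esym (mulnDl p q n))) (mxtens_index (a, l)) = rshift (p * n) (mxtens_index (a', l)).
    by apply: val_inj; rewrite /= ha' mulnDl addnA.
  by rewrite col_mxEd.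
Qed.

Lemma castmul a b r s (e : a = b) (A : 'M[R]_(r, a)) (B : 'M[R]_(a, s)) :
  castmx (erefl r, e) A *m castmx (e, erefl s) B = A *m B.
Proof. by case: b / e; rewrite !castmx_id. Qed.

Lemma KB p q d1 d2 d1' d2' (e1 : (p * n)%N = d1) (e2 : (q * n)%N = d2) (e : ((p + q) * n)%N = (d1 + d2)%N)
  (B1 : 'M[R]_(d1', p * m)) (B2 : 'M[R]_(d2', q * m)) :
  exists BB : 'M[R]_(d1' + d2', (p + q) * m), forall X u1 u2,
    BB *m Kx e X (col_mx u1 u2) = col_mx (B1 *m Kx e1 X u1) (B2 *m Kx e2 X u2).
Proof.
exists (castmx (erefl _, esym (mulnDl p q m)) (block_mx B1 0 0 B2)) => X u1 u2.
rewrite /Kx.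
have -> : castmx (esym e, erefl 1%N) (col_mx u1 u2) =
   castmx (esym (mulnDl p q n), erefl 1%N) (col_mx (castmx (esym e1, erefl 1%N) u1) (castmx (esym e2, erefl 1%N) u2)).
  rewrite -(castmx_col (esym e1) (esym e2) (etrans (esym e) (mulnDl p q n))) castmx_comp.
  by apply: eq_castmx.
by rewrite Kcol castmul mul_block_col !mul0mx addr0 add0r.
Qed.
Lemma stack_lay d1 d1' d2 d2' (L1 : lay d1 d1') (L2 : lay d2 d2') :
  exists L : lay (d1 + d2) (d1' + d2'), forall X u1 u2,
    lapp L X (col_mx u1 u2) = col_mx (lapp L1 X u1) (lapp L2 X u2).
Proof.
case: L1 => p0 p1 e0 e1 b0 b1 A0 A1 B0 B1; case: L2 => q0 q1 f0 f1 c0 c1 C0 C1 D0 D1.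
have E0 : ((p0 + q0) * n)%N = (d1 + d2)%N by rewrite mulnDl e0 f0.
have E1 : ((p1 + q1) * n)%N = (d1 + d2)%N by rewrite mulnDl e1 f1.
have [BB0 HB0] := KB e0 f0 E0 B0 D0.
have [BB1 HB1] := KB e1 f1 E1 B1 D1.
exists (Lay E0 E1 (col_mx b0 c0) (col_mx b1 c1) (block_mx A0 0 0 C0) (block_mx A1 0 0 C1) BB0 BB1) => X u1 u2.
rewrite /lapp /= HB0 HB1 !mul_block_col !mul0mx !addr0 !add0r !add_col_mx /relu map_col_mx add_col_mx.
by [].
Qed.

Lemma reach_stack_step d1 d1' d2 d2' (L1 : lay d1 d1') (L2 : lay d2 d2') (h1 : M -> 'cV[R]_d1) (h2 : M -> 'cV[R]_d2) :
  mrnn_reach (fun X => col_mx (h1 X) (h2 X)) ->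
  mrnn_reach (fun X => col_mx (lapp L1 X (h1 X)) (lapp L2 X (h2 X))).
Proof.
move=> hh; have [L HL] := stack_lay L1 L2.
by apply: reach_ext (reach_lapp L hh) => X; rewrite HL.
Qed.

Lemma reach_col0l d2 (h2 : M -> 'cV[R]_d2) : mrnn_reach h2 ->
  forall d1, mrnn_reach (fun X => col_mx (0 : 'cV[R]_d1) (h2 X)).
Proof.
elim=> [d0 | d d' h p0 p1 e0 e1 b0 b1 A0 A1 B0 B1 hh IH] d1.
- apply: reach_ext (mrnn_zero R m n (d1 + d0)) => X; by rewrite col_mx0.
- pose L := Lay e0 e1 b0 b1 A0 A1 B0 B1.
  have := reach_stack_step (zlay L d1) L (IH d).
  apply: reach_ext => X; by rewrite lapp_z.
Qed.

Lemma reach_col d1 (h1 : M -> 'cV[R]_d1) : mrnn_reach h1 ->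
  forall d2 (h2 : M -> 'cV[R]_d2), mrnn_reach h2 -> mrnn_reach (fun X => col_mx (h1 X) (h2 X)).
Proof.
elim=> [d0 | d d' h p0 p1 e0 e1 b0 b1 A0 A1 B0 B1 hh IH] d2 h2 hh2.
- exact: reach_col0l.
- pose L := Lay e0 e1 b0 b1 A0 A1 B0 B1.
  case: d2 h2 / hh2 => [d2 | c c' g q0 q1 f0 f1 c0 c1 C0 C1 D0 D1 hg].
  + have := reach_stack_step L (zlay L d2) (IH _ _ hh).
    apply: reach_ext => X; by rewrite lapp_z.
  + have := (reach_stack_step L (Lay f0 f1 c0 c1 C0 C1 D0 D1) (IH _ _ hg)).
    by apply: reach_ext.
Qed.
Definition rep (g : M -> R) := exists d (h : M -> 'cV[R]_d), mrnn_reach h /\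
  (exists p, (p * n)%N = d) /\ exists c : 'rV[R]_d, forall X, g X = (c *m h X) 0 0.

Lemma rep_ext g g' : (forall X, g X = g' X) -> rep g -> rep g'.
Proof. by move=> /functional_extensionality ->. Qed.

Lemma rowd a (z : 'I_a) (Y : 'cV[R]_a) : ((delta_mx 0 z : 'rV[R]_a) *m Y) 0 0 = Y z 0.
Proof. by rewrite -rowE mxE. Qed.

Lemma deltaE a b (i0 : 'I_a) (t : 'I_b) (Y : 'cV[R]_b) : (delta_mx i0 t *m Y) i0 0 = Y t 0.
Proof.
rewrite mxE (bigD1 t) //= big1 ?addr0; first by rewrite mxE !eqxx mul1r.
by move=> s /negPf hs; rewrite mxE hs andbF mul0r.
Qed.

Lemma entD p q (A B : 'M[R]_(p, q)) i j : (A + B) i j = A i j + B i j.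
Proof. by rewrite mxE. Qed.
Lemma entZ p q a (A : 'M[R]_(p, q)) i j : (a *: A) i j = a * A i j.
Proof. by rewrite mxE. Qed.
Lemma entN p q (A : 'M[R]_(p, q)) i j : (- A) i j = - A i j.
Proof. by rewrite mxE. Qed.
Lemma reluE d (x : 'cV[R]_d) i : relu x i 0 = Num.max 0 (x i 0).
Proof. by rewrite mxE. Qed.

Variable z : 'I_n.

Lemma rep_const a : rep (fun _ => a).
Proof.
pose L := @Lay 0 n 0 0 (mul0n n) (mul0n n) (const_mx a) 0 0 0 0 0.
exists n, (fun X => lapp L X 0); split.
  exact: (reach_lapp L (mrnn_zero R m n 0)).
split; first by exists 1%N; rewrite mul1n.
exists (delta_mx 0 z) => X; rewrite rowd /lapp /= !mul0mx !addr0 relu0 addr0 mxE //.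
Qed.

Lemma rep_lin a b g1 g2 : rep g1 -> rep g2 -> rep (fun X => a * g1 X + b * g2 X).
Proof.
move=> [d1 [h1 [hh1 [[p1 e1] [c1 H1]]]]] [d2 [h2 [hh2 [[p2 e2] [c2 H2]]]]].
exists (d1 + d2)%N, (fun X => col_mx (h1 X) (h2 X)); split; first exact: reach_col.
split; first by exists (p1 + p2)%N; rewrite mulnDl e1 e2.
exists (row_mx (a *: c1) (b *: c2)) => X.
by rewrite mul_row_col -!scalemxAl entD !entZ H1 H2.
Qed.

Lemma dzE b (Y : 'M[R]_(1, b)) (s : 'cV[R]_b) : ((delta_mx z 0 *m Y) *m s) z 0 = (Y *m s) 0 0.
Proof. by rewrite -mulmxA mxE big_ord1 mxE !eqxx mul1r. Qed.

Lemma rep_max g1 g2 : rep g1 -> rep g2 -> rep (fun X => Num.max (g1 X) (g2 X)).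
Proof.
move=> [d1 [h1 [hh1 [[p1 e1] [c1 H1]]]]] [d2 [h2 [hh2 [[p2 e2] [c2 H2]]]]].
have e : ((p1 + p2) * n)%N = (d1 + d2)%N by rewrite mulnDl e1 e2.
pose L := @Lay (d1 + d2) n _ _ e e 0 0 (delta_mx z 0 *m row_mx c1 0) (delta_mx z 0 *m row_mx (- c1) c2) 0 0.
exists n, (fun X => lapp L X (col_mx (h1 X) (h2 X))); split.
  exact: (reach_lapp L (reach_col hh1 hh2)).
split; first by exists 1%N; rewrite mul1n.
exists (delta_mx 0 z) => X; rewrite rowd /lapp /= !mul0mx !addr0 !add0r entD reluE !dzE.
rewrite !mul_row_col !mul0mx addr0 mulNmx entD entN -H1 -H2.
by rewrite addr_maxr addr0 addNKr.
Qed.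
Lemma rep_mulvar (i : 'I_m) (j : 'I_n) g : rep g -> rep (fun X => X i j * g X).
Proof.
move=> [d [h [hh [[p e] [c H]]]]].
pose L1 := @Lay d n _ _ e e 0 0 (delta_mx j 0 *m c) 0 0 0.
pose t : 'I_(1 * m) := mxtens_index (ord0 : 'I_1, i).
pose L2 := @Lay n n _ _ (mul1n n) (mul1n n) 0 0 0 0 (delta_mx z t) 0.
exists n, (fun X => lapp L2 X (lapp L1 X (h X))); split.
  exact: (reach_lapp L2 (reach_lapp L1 hh)).
split; first by exists 1%N; rewrite mul1n.
exists (delta_mx 0 z) => X; rewrite rowd.
have -> : lapp L1 X (h X) = delta_mx j 0 *m (c *m h X).
  by rewrite /lapp /= !mul0mx !addr0 !add0r relu0 addr0 mulmxA.
rewrite /lapp /= !mul0mx !addr0 !add0r relu0 addr0 deltaE /Kx /t KE.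
transitivity (\sum_(l < n) X i l * ((l == j)%:R * g X)).
  rewrite (bigD1 j) //= eqxx mul1r big1 ?addr0 // => l /negPf hl.
  by rewrite hl mul0r mulr0.
apply: eq_bigr => l _; rewrite castmxE /= cast_ord_id.
have -> : cast_ord (esym (esym (mul1n n))) (mxtens_index (ord0 : 'I_1, l)) = l.
  by apply: val_inj; rewrite /= mul0n add0n.
by rewrite mxE big_ord1 mxE andbT -H.
Qed.
Lemma vecE (l : 'I_(m * n)) : exists i j, forall X : M, vec X l 0 = X i j.
Proof.
rewrite /vec.
move E: (cast_ord (esym (mulnC n m)) l) => k.
case: (mxvec_indexP k) E => j i E.
exists i, j => X; rewrite mxE castmxE /= cast_ord_id E mxvecE mxE //.
Qed.

Lemma rep_pow l e g : rep g -> rep (fun X => vec X l 0 ^+ e * g X).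
Proof.
have [i [j Hij]] := vecE l.
move=> hg; elim: e => [|e IH].
  by apply: rep_ext hg => X; rewrite expr0 mul1r.
by apply: rep_ext (rep_mulvar i j IH) => X; rewrite exprS -mulrA Hij.
Qed.

Lemma rep_prod (s : seq 'I_(m * n)) (k : 'I_(m * n) -> nat) g : rep g ->
  rep (fun X => (\prod_(l <- s) vec X l 0 ^+ k l) * g X).
Proof.
move=> hg; elim: s => [|l s IH].
  by apply: rep_ext hg => X; rewrite big_nil mul1r.
by apply: rep_ext (rep_pow l (k l) IH) => X; rewrite big_cons mulrA.
Qed.

Lemma rep_sumseq (T : Type) (s : seq T) (F : T -> M -> R) : (forall x, rep (F x)) ->
  rep (fun X => \sum_(x <- s) F x X).
Proof.
move=> hF; elim: s => [|x s IH].
  by apply: rep_ext (rep_const 0) => X; rewrite big_nil.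
by apply: rep_ext (rep_lin 1 1 (hF x) IH) => X; rewrite big_cons !mul1r.
Qed.

Lemma rep_poly (p : {mpoly R[m * n]}) : rep (fun X => p.@[fun l => vec X l 0]).
Proof.
have := @rep_sumseq _ (msupp p) (fun mon X => (\prod_(l < m * n) vec X l 0 ^+ mon l) * p@_mon)
  (fun mon => @rep_prod _ _ _ (rep_const _)).
apply: rep_ext => X; rewrite mevalE; apply: eq_bigr => mon _; rewrite mulrC.
by [].
Qed.

Lemma rep_neg g : rep g -> rep (fun X => - g X).
Proof. move=> h; by apply: rep_ext (rep_lin (-1) 0 h h) => X; rewrite mul0r addr0 mulN1r. Qed.

Lemma rep_isd (f : 'cV[R]_(m * n) -> R) : isd_scalar f -> rep (fun X => f (vec X)).
Proof.
elim=> [p | f1 f2 _ h1 _ h2 | f1 f2 _ h1 _ h2].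
- exact: rep_poly.
- apply: rep_ext (rep_neg (rep_max (rep_neg h1) (rep_neg h2))) => X.
  by rewrite oppr_max !opprK.
- exact: rep_max.
Qed.

Lemma rep_family k (F : 'I_k -> M -> R) : (forall i, rep (F i)) ->
  exists d (h : M -> 'cV[R]_d), mrnn_reach h /\ (exists p, (p * n)%N = d) /\
   exists C : 'M[R]_(k, d), forall X i, F i X = (C *m h X) i 0.
Proof.
elim: k F => [|k IH] F hF.
  exists 0%N, (fun _ => 0); split; first exact: mrnn_zero.
  split; first by exists 0%N; rewrite mul0n.
  by exists 0 => X [].
have [d1 [h1 [hh1 [[p1 e1] [c1 H1]]]]] := hF ord0.
have [d2 [h2 [hh2 [[p2 e2] [C2 H2]]]]] := IH (fun i => F (lift ord0 i)) (fun i => hF _).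
exists (d1 + d2)%N, (fun X => col_mx (h1 X) (h2 X)); split; first exact: reach_col.
split; first by exists (p1 + p2)%N; rewrite mulnDl e1 e2.
exists (col_mx (row_mx c1 0) (row_mx 0 C2)) => X.
change (forall i : 'I_(1 + k), F i X = (col_mx (row_mx c1 0) (row_mx 0 C2) *m col_mx (h1 X) (h2 X)) i 0) => i.
rewrite mul_col_mx !mul_row_col !mul0mx addr0 add0r.
case: (unliftP ord0 i) => [i'|] ->.
- rewrite H2; have -> : lift ord0 i' = rshift 1 i' :> 'I_(1 + k) by apply: val_inj.
  by rewrite col_mxEd.
- rewrite H1; have -> : ord0 = lshift k (ord0 : 'I_1) :> 'I_(1 + k) by apply: val_inj.
  by rewrite col_mxEu.
Qed.
End D1.

Section Main.
Variable R : realType.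
Variables m n k : nat.

Lemma vecK (v : 'cV[R]_(m * n)) : vec (unvec v) = v.
Proof. by rewrite /vec /unvec trmxK vec_mxK castmx_comp castmx_id trmxK. Qed.

Lemma unvecK (X : 'M[R]_(m, n)) : unvec (vec X) = X.
Proof. by rewrite /vec /unvec trmxK castmx_comp castmx_id mxvecK trmxK. Qed.

Lemma const_mrnn (c : 'cV[R]_k) : MRNN (fun _ : 'M[R]_(m, n) => c).
Proof.
pose L := @Lay R m n 0 k 0 0 (mul0n n) (mul0n n) c 0 0 0 0 0.
apply: reach_ext (reach_lapp L (mrnn_zero R m n 0)) => X.
by rewrite /lapp /= !mul0mx !addr0 relu0 addr0.
Qed.

Lemma isd_to_mrnn (f : 'cV[R]_(m * n) -> 'cV[R]_k) : ISD f ->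
  exists N : 'M[R]_(m, n) -> 'cV[R]_k, MRNN N /\ f = N \o @unvec R m n.
Proof.
move=> hf.
case: (posnP n) => [n0 | npos].
  exists (fun _ => f 0); split; first exact: const_mrnn.
  apply: functional_extensionality => v /=; congr f.
  apply/matrixP => i j; exfalso; have := ltn_ord i; move: (val i) => x; by rewrite n0 muln0.
pose z : 'I_n := Ordinal npos.
pose F (i : 'I_k) (X : 'M[R]_(m, n)) := f (vec X) i 0.
have hF : forall i, rep (F i) by move=> i; exact: (rep_isd z (hf i)).
have [d [h [hh [[p e] [C HC]]]]] := rep_family hF.
pose L := @Lay R m n d k p p e e 0 0 C 0 0 0.
exists (fun X => lapp L X (h X)); split; first exact: reach_lapp.
apply: functional_extensionality => v /=; apply/colP => i.
rewrite /lapp /= !mul0mx !addr0 !add0r relu0 addr0 -HC /F vecK //.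
Qed.

Lemma mrnn_of_isd (G : 'M[R]_(m, n) -> 'cV[R]_k) : ISD (G \o @unvec R m n) -> MRNN G.
Proof.
move=> /isd_to_mrnn [N [hN E]].
have -> : G = N; last by [].
apply: functional_extensionality => X.
by rewrite -[X]unvecK; have := congr1 (fun F => F (vec X)) E; rewrite /= => ->.
Qed.

Lemma mrnn_isd (N : 'M[R]_(m, n) -> 'cV[R]_k) : MRNN N -> ISD (N \o @unvec R m n).
Proof. move=> hN i; exact: (reach_isd hN i). Qed.
End Main.

Theorem mainTheorem8 (R : realType) (m n k : nat) :
  (* every ISD map is N o vec^{-1} for some MRNN N *)
  (forall f : 'cV[R]_(m * n) -> 'cV[R]_k, ISD f ->
     exists N : 'M[R]_(m, n) -> 'cV[R]_k, MRNN N /\ f = N \o @unvec R m n) /\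
  (* every MRNN is f o vec for some ISD map f *)
  (forall N : 'M[R]_(m, n) -> 'cV[R]_k, MRNN N ->
     exists f : 'cV[R]_(m * n) -> 'cV[R]_k, ISD f /\ N = f \o @vec R m n) /\
  (* consequently: MRNN is a ring under pointwise operations ... *)
  (MRNN (fun _ : 'M[R]_(m, n) => (0 : 'cV[R]_k)) /\
   MRNN (fun _ : 'M[R]_(m, n) => (const_mx 1 : 'cV[R]_k)) /\
   (forall N1 N2 : 'M[R]_(m, n) -> 'cV[R]_k, MRNN N1 -> MRNN N2 ->
      MRNN (fun X => N1 X + N2 X) /\
      MRNN (fun X => - N1 X) /\
      MRNN (fun X => hadamard (N1 X) (N2 X)))) /\
  (* ... and Phi : N |-> N o vec^{-1} is a bijective ring homomorphism onto ISD *)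
  (forall N : 'M[R]_(m, n) -> 'cV[R]_k, MRNN N -> ISD (N \o @unvec R m n)) /\
  (forall N1 N2 : 'M[R]_(m, n) -> 'cV[R]_k, MRNN N1 -> MRNN N2 ->
     N1 \o @unvec R m n = N2 \o @unvec R m n -> N1 = N2) /\
  (forall f : 'cV[R]_(m * n) -> 'cV[R]_k, ISD f ->
     exists2 N, MRNN N & N \o @unvec R m n = f) /\
  (forall N1 N2 : 'M[R]_(m, n) -> 'cV[R]_k,
     (fun X => N1 X + N2 X) \o @unvec R m n
       = (fun v => (N1 \o @unvec R m n) v + (N2 \o @unvec R m n) v) /\
     (fun X => hadamard (N1 X) (N2 X)) \o @unvec R m n
       = (fun v => hadamard ((N1 \o @unvec R m n) v) ((N2 \o @unvec R m n) v)) /\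
     (fun X => - N1 X) \o @unvec R m n = (fun v => - (N1 \o @unvec R m n) v) /\
     (fun _ : 'M[R]_(m, n) => (const_mx 1 : 'cV[R]_k)) \o @unvec R m n
       = (fun _ => const_mx 1)).
Proof.
split; first exact: isd_to_mrnn.
split.
  move=> N hN; exists (N \o @unvec R m n); split; first exact: mrnn_isd.
  by apply: functional_extensionality => X /=; rewrite unvecK.
split.
  split; first exact: const_mrnn.
  split; first exact: const_mrnn.
  move=> N1 N2 h1 h2; have i1 := mrnn_isd h1; have i2 := mrnn_isd h2.
  split.
    apply: mrnn_of_isd => i.
    apply: isd_ext (isd_add (i1 i) (i2 i)) => v /=; by rewrite mxE.
  split.
    apply: mrnn_of_isd => i.
    apply: isd_ext (isd_pmul (i1 i) (-1)%:MP) => v /=; by rewrite mxE mevalC mulN1r.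
  apply: mrnn_of_isd => i.
  apply: isd_ext (isd_mul (i2 i) (i1 i)) => v /=; by rewrite mxE.
split; first exact: mrnn_isd.
split.
  move=> N1 N2 _ _ E; apply: functional_extensionality => X.
  by rewrite -[X]unvecK; have := congr1 (fun F => F (vec X)) E; rewrite /= => ->.
split.
  by move=> f /isd_to_mrnn [N [hN E]]; exists N.
by move=> N1 N2.
Qed.
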